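(* Let $\mathbf a=(a_1,\dots,a_n)$ be a sequence of integers with $a_1+\cdots+a_n=1$, viewed as a lattice path $p$ with steps $(1,a_1),\dots,(1,a_n)$ from $(0,0)$ to $(n,1)$, with vertices $P_0,\dots,P_n$. Let $T\subseteq\{0,1,\dots,n-1\}$ be a set of $k\ge 1$ indices (the positions of the special vertices of $p$; the last vertex $P_n$ is not special). For $t\in T$, the conjugate $\sigma^t(p)$ has as special vertices its vertices in positions $m\in\{0,\dots,n-1\}$ with $(t+m)\bmod n\in T$ (so special vertices are carried along by cyclic shifting), and in particular $\sigma^t(p)$ starts with a special vertex. Let $X(\sigma^t(p))$ be the number of special vertices of $\sigma^t(p)$ lying on or below the $x$-axis, i.e. the number of $m\in\{0,\dots,n-1\}$ with $(t+m)\bmod n\in T$ and $a_{t+1}+a_{t+2}+\cdots+a_{t+m}\le 0$ (indices of $a$ taken modulo $n$). Then $$\{X(\sigma^{t}(p)) : t\in T\}=\{1,2,\dots,k\}.$$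
   Context: The conjugate $\sigma^t(p)$ is the path with step sequence $(a_{t+1},\dots,a_n,a_1,\dots,a_t)$ starting at the origin; its vertex in position $m$ corresponds to vertex $P_{t+m \bmod n}$ of $p$. *)

(* Defs.v *)
From mathcomp Require Import all_boot all_order all_algebra.
Unset Printing Implicit Defensive.
Import Order.TTheory GRing.Theory Num.Theory.
Local Open Scope ring_scope.

(* The step sequence (a_1,...,a_n) is encoded 0-indexed: a_{i+1} = a i for
   i < n; indices are always reduced modulo n, so values of a outside
   0..n-1 are irrelevant. *)

Definition special (n : nat) (T : {set 'I_n}) (x : nat) : bool :=
  [exists i : 'I_n, (i \in T) && (val i == (x %% n)%N)].

Definition conj_height (n : nat) (a : nat -> int) (t m : nat) : int :=
  \sum_(j < m) a ((t + j) %% n)%N.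

Definition Xconj (n : nat) (a : nat -> int) (T : {set 'I_n}) (t : nat) : nat :=
  #|[set m : 'I_n | special n T (t + m) && (conj_height n a t m <= 0)]|.

(* Main.v *)
Require Import Defs.
From mathcomp Require Import all_boot all_order all_algebra.
From mathcomp Require Import zify.
Import Order.TTheory GRing.Theory Num.Theory.
Local Open Scope ring_scope.

Definition HH (n : nat) (a : nat -> int) (i : nat) : int :=
  \sum_(j < i) a (j %% n)%N.

Lemma conj_heightE n (a : nat -> int) t m : (t < n)%N ->
  conj_height n a t m = HH n a (t + m) - HH n a t.
Proof.
move=> _; elim: m => [|m IH].
  by rewrite /conj_height big_ord0 addn0 subrr.
rewrite /conj_height big_ord_recr /= -/(conj_height n a t m) IH.
by rewrite addnS /HH big_ord_recr /= addrAC.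
Qed.

Lemma HH_shift n (a : nat -> int) u : \sum_(i < n) a i = 1 -> (u <= n)%N ->
  HH n a (n + u) = 1 + HH n a u.
Proof.
move=> Hs _.
have Hn : HH n a n = 1.
  rewrite -Hs /HH; apply: eq_bigr => i _.
  by rewrite modn_small.
elim: u => [|u IH]; first by rewrite addn0 Hn /HH big_ord0 addr0.
rewrite addnS /HH big_ord_recr /= -/(HH n a (n+u)) IH big_ord_recr /=.
by rewrite modnDl -/(HH n a u) addrA.
Qed.

Definition ltp n (a : nat -> int) (u t : 'I_n) : bool :=
  (HH n a u < HH n a t) || ((HH n a u == HH n a t) && (t < u)%N).

Arguments ltp {n}.

Definition RR n (a : nat -> int) (T : {set 'I_n}) (t : 'I_n) : {set 'I_n} :=
  [set u in T | (u == t) || ltp a u t].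

Arguments RR {n}.

Lemma XconjE n (a : nat -> int) T (t : 'I_n) : \sum_(i < n) a i = 1 ->
  Xconj n a T t = #|RR a T t|.
Proof.
move=> Hs.
have npos : (0 < n)%N by case: t => /= ? ?; lia.
pose f (m : 'I_n) : 'I_n := Ordinal (ltn_pmod (t + m) npos).
have finj : injective f.
  move=> m m' /(congr1 val) /= /eqP; rewrite eqn_modDl !modn_small //.
  by move/eqP/val_inj.
rewrite /Xconj -(card_preimset (RR a T t) finj); apply: eq_card => m.
rewrite !inE.
have -> : special n T (t + m) = (f m \in T).
  apply/existsP/idP => [[i /andP[iT /eqP ie]]|fT].
    by have -> : f m = i by apply: val_inj; rewrite /= ie.
  by exists (f m); rewrite fT eqxx.
case: (f m \in T) => //=; rewrite conj_heightE // /ltp.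
have tn := ltn_ord t; have mn := ltn_ord m.
case: (ltnP (t + m) n) => Htm.
  have e : ((t + m) %% n = t + m)%N by rewrite modn_small.
  rewrite -(inj_eq val_inj) /= e.
  case: (posnP m) => [->|mp]; first by rewrite addn0 eqxx subrr lexx.
  move: (HH n a (t + m)) (HH n a t) => x y.
  by apply/idP/idP; lia.
have e : ((t + m) %% n = t + m - n)%N.
  by rewrite -{1}(subnKC Htm) modnDl modn_small //; lia.
have -> : HH n a (t + m) = 1 + HH n a (t + m - n).
  by rewrite -HH_shift // ?subnKC //; lia.
rewrite -(inj_eq val_inj) /= e.
move: (HH n a (t + m - n)) (HH n a t) => x y.
by apply/idP/idP; lia.
Qed.

Lemma ltp_trans n (a : nat -> int) (u v w : 'I_n) : ltp a u v -> ltp a v w -> ltp a u w.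
Proof.
rewrite /ltp; move: (HH n a u) (HH n a v) (HH n a w) => x y z.
move: (val u) (val v) (val w) => p q r; lia.
Qed.

Arguments ltp_trans {n a u v w}.

Lemma ltp_irr n (a : nat -> int) (u : 'I_n) : ltp a u u = false.
Proof. rewrite /ltp; move: (HH n a u) => x; lia. Qed.

Lemma ltp_total n (a : nat -> int) (u v : 'I_n) : u != v -> ltp a u v || ltp a v u.
Proof.
rewrite -(inj_eq val_inj) /ltp; move: (HH n a u) (HH n a v) => x y.
by case: u v x y => [p hp] [q hq] /= x y; lia.
Qed.

Arguments ltp_total {n} a {u v}.
Arguments ltp_irr {n} a u.

Lemma RR_lt n (a : nat -> int) (T : {set 'I_n}) (u v : 'I_n) : u \in T -> v \in T -> ltp a u v ->
  (#|RR a T u| < #|RR a T v|)%N.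
Proof.
move=> uT vT luv; apply: proper_card; apply/properP; split.
  apply/subsetP => w; rewrite !inE => /andP[-> /orP[/eqP ->|lw]].
    by rewrite luv orbT.
  by rewrite (ltp_trans lw luv) orbT.
exists v; first by rewrite !inE vT eqxx.
rewrite !inE vT /=; apply/negP => /orP[/eqP e|lvu].
  by move: luv; rewrite e ltp_irr.
by move: (ltp_trans luv lvu); rewrite ltp_irr.
Qed.

Arguments RR_lt {n a T u v}.

Theorem theorem4 (n : nat) (a : nat -> int) (T : {set 'I_n}) (k : nat) :
  \sum_(i < n) a i = 1 ->
  #|T| = k -> (1 <= k)%N ->
  forall x : nat,
    (exists2 t : 'I_n, t \in T & Xconj n a T t = x) <-> (1 <= x <= k)%N.
Proof.
move=> Hs HT Hk x.
pose r (t : 'I_n) := #|RR a T t|.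
have rb t : t \in T -> (1 <= r t <= k)%N.
  move=> tT; apply/andP; split.
    by apply/card_gt0P; exists t; rewrite !inE tT eqxx.
  rewrite -HT; apply: subset_leq_card; apply/subsetP => w.
  by rewrite inE => /andP[].
split.
  by move=> [t tT <-]; rewrite XconjE //; apply: rb.
move=> xb.
have rinj : {in enum T &, injective r}.
  move=> u v; rewrite !mem_enum => uT vT e; apply/eqP; apply/negPn/negP => ne.
  case/orP: (ltp_total a ne) => l.
    by move: (RR_lt uT vT l); rewrite /r in e; rewrite e ltnn.
  by move: (RR_lt vT uT l); rewrite /r in e; rewrite e ltnn.
have U : uniq (map r (enum T)) by rewrite (map_inj_in_uniq rinj) enum_uniq.
have S : {subset map r (enum T) <= iota 1 k}.
  move=> y /mapP[t]; rewrite mem_enum => tT ->.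
  rewrite mem_iota; move: (rb t tT); lia.
have Sz : (size (iota 1 k) <= size (map r (enum T)))%N.
  by rewrite size_map size_iota -cardE HT.
have [_ E] := uniq_min_size U S Sz.
have : x \in iota 1 k by rewrite mem_iota; lia.
rewrite -E => /mapP[t]; rewrite mem_enum => tT ->.
by exists t => //; rewrite XconjE.
Qed.
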